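(* For $n\geq 1$, the polynomials $\widehat{A}_n(t,q)$ satisfy $$2\widehat{A}_{n+1}(t,q)=(1+tq)\widehat{A}_n(tq,q)+(1+tq^n)\widehat{A}_n(t,q)+\sum_{i=1}^{n-1}(1+t^2q^{2i+1})\binom{n}{i}\widehat{A}_i(t,q)\widehat{A}_{n-i}(tq^{i+1},q),$$ with $\widehat{A}_1(t,q)=1$.
   Context: For $\pi=\pi_1\cdots\pi_n\in\mathfrak{S}_n$ (permutations of $\{1,\dots,n\}$), $\widehat{D}(\pi)=\{2i:\pi_{2i}<\pi_{2i+1}\}\cup\{2i+1:\pi_{2i+1}>\pi_{2i+2}\}$ (indices in $\{1,\dots,n-1\}$), ${\rm altdes}(\pi)=|\widehat{D}(\pi)|$, ${\rm altmaj}(\pi)=\sum_{i\in\widehat{D}(\pi)}i$, and $\widehat{A}_n(t,q)=\sum_{\pi\in\mathfrak{S}_n}t^{{\rm altdes}(\pi)}q^{{\rm altmaj}(\pi)}$. *)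

(* Defs.v *)
From mathcomp Require Import all_boot all_order all_algebra all_fingroup.
Set Implicit Arguments. Unset Strict Implicit. Unset Printing Implicit Defensive.
Import GRing.Theory.
Local Open Scope ring_scope.

(* A permutation s : 'S_n is read as the word pi_1 ... pi_n with
   pi_k = s (k-1) (values in {0..n-1}, an order-preserving relabelling of {1..n}).
   word s = [:: pi_1; ...; pi_n], so pi_k = nth 0 (word s) k.-1. *)
Definition word n (s : 'S_n) : seq nat := [seq val (s i) | i <- enum 'I_n].

Definition pi_at n (s : 'S_n) (k : nat) : nat := nth 0%N (word s) k.-1.

Definition in_altD n (s : 'S_n) (i : nat) : bool :=
  if odd i then (pi_at s i.+1 < pi_at s i)%N else (pi_at s i < pi_at s i.+1)%N.

Definition altD n (s : 'S_n) : seq nat := [seq i <- iota 1 n.-1 | in_altD s i].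

Definition altdes n (s : 'S_n) : nat := size (altD s).
Definition altmaj n (s : 'S_n) : nat := sumn (altD s).

Definition Ahat (R : comPzRingType) (n : nat) (t q : R) : R :=
  \sum_(s : 'S_n) t ^+ altdes s * q ^+ altmaj s.

(* Main.v *)
Require Import Defs.
From mathcomp Require Import all_boot all_order all_algebra all_fingroup.
From mathcomp Require Import zify ring.
Import GRing.Theory.
Local Open Scope ring_scope.
Set Implicit Arguments. Unset Strict Implicit. Unset Printing Implicit Defensive.


Section W.
Variable R : comPzRingType.

Definition cnd (b : bool) (k x y : nat) : bool :=
  if odd k (+) b then (y < x)%N else (x < y)%N.

Fixpoint W (t q : R) (b : bool) (k : nat) (w : seq nat) : R :=
  match w with
  | x :: ((y :: _) as w') => (if cnd b k x y then t * q ^+ k else 1) * W t q b k.+1 w'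
  | _ => 1
  end.

Lemma W_cons2 t q b k x y w :
  W t q b k (x :: y :: w) = (if cnd b k x y then t * q ^+ k else 1) * W t q b k.+1 (y :: w).
Proof. by []. Qed.
Lemma W_nil t q b k : W t q b k [::] = 1. Proof. by []. Qed.
Lemma W_one t q b k x : W t q b k [:: x] = 1. Proof. by []. Qed.
Arguments W : simpl never.

Lemma W_shift t q b k s w :
  W t q b (k + s) w = W (t * q ^+ s) q (b (+) odd s) k w.
Proof.
elim: w k => [|x w IH] k //; case: w IH => [|y w] IH //.
rewrite !W_cons2 -IH addSn; congr (_ * _).
have -> : cnd b (k + s) x y = cnd (b (+) odd s) k x y.
  by rewrite /cnd oddD; case: (odd k); case: (odd s); destruct b.
by case: ifP => // _; rewrite -mulrA -exprD addnC.
Qed.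

Lemma W_cat t q b k s1 y s2 :
  W t q b k (s1 ++ y :: s2) = W t q b k (rcons s1 y) * W t q b (k + size s1) (y :: s2).
Proof.
elim: s1 k => [|x s1 IH] k /=; first by rewrite mul1r addn0.
case: s1 IH => [|z s1] IH /=.
  by rewrite !W_cons2 W_one mulr1 addn1.
by rewrite !W_cons2 -cat_cons IH mulrA addSnnS.
Qed.

Lemma W_rcons t q b k x s y :
  W t q b k (rcons (x :: s) y) =
  W t q b k (x :: s) * (if cnd b (k + size s) (last x s) y then t * q ^+ (k + size s) else 1).
Proof.
elim: s k x => [|z s IH] k x /=; first by rewrite W_cons2 !W_one addn0 mulr1 mul1r.
by rewrite !W_cons2 -rcons_cons IH mulrA addSnnS.
Qed.

Lemma W_map t q b k c (f : nat -> nat) w :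
  {in w &, forall x y, (f x < f y)%N = if c then (y < x)%N else (x < y)%N} ->
  W t q b k (map f w) = W t q (b (+) c) k w.
Proof.
elim: w k => [|x w IH] k //; case: w IH => [|y w] IH // H.
rewrite map_cons map_cons !W_cons2 -map_cons IH; last by move=> u v Hu Hv; apply: H; rewrite inE ?Hu ?Hv orbT.
congr (_ * _).
have -> : cnd b k (f x) (f y) = cnd (b (+) c) k x y.
  rewrite /cnd !H ?inE ?eqxx ?orbT //.
  by case: (odd k); destruct b; destruct c.
by [].
Qed.

End W.
Arguments W : simpl never.

Lemma perms_map (f g : nat -> nat) (S : seq nat) :
  {in S, cancel f g} -> perm_eq (permutations (map f S)) (map (map f) (permutations S)).
Proof.
move=> fK.
have gf : forall u, perm_eq u S -> map g (map f u) = u.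
  move=> u Hu; rewrite -map_comp -[RHS]map_id; apply/eq_in_map => x xu /=.
  by rewrite fK // -(perm_mem Hu).
apply: uniq_perm; first exact: permutations_uniq.
  rewrite map_inj_in_uniq ?permutations_uniq // => u v.
  rewrite !mem_permutations => Hu Hv E.
  by rewrite -(gf u Hu) -(gf v Hv) E.
move=> u; rewrite mem_permutations; apply/idP/mapP => [Hu | [v Hv ->]].
  exists (map g u).
    rewrite mem_permutations.
    rewrite -(gf S (perm_refl S)).
    exact: perm_map.
  rewrite -map_comp -[LHS]map_id; apply/eq_in_map => x xu /=.
  have : x \in map f S by rewrite -(perm_mem Hu).
  by case/mapP => y yS ->; rewrite fK.
by apply: perm_map; rewrite -mem_permutations.
Qed.

Section S.
Variable R : comPzRingType.

Lemma sum_perms_map (F : seq nat -> R) (f g : nat -> nat) (S : seq nat) :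
  {in S, cancel f g} ->
  \sum_(w <- permutations (map f S)) F w = \sum_(w <- permutations S) F (map f w).
Proof. by move=> fK; rewrite (perm_big _ (perms_map fK)) big_map. Qed.

Lemma sum_perms_perm (F : seq nat -> R) (S1 S2 : seq nat) :
  perm_eq S1 S2 ->
  \sum_(w <- permutations S1) F w = \sum_(w <- permutations S2) F w.
Proof. by move=> E; apply: perm_big; apply: perm_permutations. Qed.

End S.

Section S3.
Variable R : comPzRingType.
Implicit Types t q : R.

Lemma relabel t q b k (S : seq nat) : uniq S ->
  \sum_(w <- permutations S) W t q b k w =
  \sum_(w <- permutations (iota 0 (size S))) W t q b k w.
Proof.
move=> uS.
set S' := sort leq S.
have pS : perm_eq S' S by rewrite perm_sort.
rewrite -(sum_perms_perm _ pS) -(perm_size pS).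
have uS' : uniq S' by rewrite (perm_uniq pS).
have sS' : sorted ltn S'.
  by rewrite ltn_sorted_uniq_leq uS' sort_sorted //; exact: leq_total.
have -> : S' = map (nth 0%N S') (iota 0 (size S')) by rewrite -/(mkseq _ _) mkseq_nth.
rewrite (@sum_perms_map _ _ _ (index^~ S')); last first.
  by move=> x; rewrite mem_iota add0n => /andP [_ xs]; rewrite index_uniq.
rewrite size_map size_iota; apply: eq_big_seq => w; rewrite mem_permutations => Hw.
rewrite (@W_map _ _ _ _ _ false) ?addbF // => x y.
rewrite !(perm_mem Hw) !mem_iota !add0n => /andP [_ xs] /andP [_ ys].
have H := sorted_ltn_nth ltn_trans 0%N sS'.
case: (ltngtP x y) => [xy | yx | ->]; first by rewrite H.
  by apply/negbTE; rewrite -leqNgt ltnW // H.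
by rewrite ltnn.
Qed.

Lemma compl t q b k m :
  \sum_(w <- permutations (iota 0 m)) W t q b k w =
  \sum_(w <- permutations (iota 0 m)) W t q (~~ b) k w.
Proof.
set f := fun x => (m.-1 - x)%N.
have pm : perm_eq (map f (iota 0 m)) (iota 0 m).
  apply: uniq_perm; last first.
  - move=> x; apply/mapP/idP => [[y]|]; rewrite !mem_iota /f /=.
      by move=> Hy ->; lia.
    by move=> Hx; exists (m.-1 - x)%N; rewrite ?mem_iota /=; lia.
  - by rewrite iota_uniq.
  rewrite map_inj_in_uniq ?iota_uniq // => x y; rewrite !mem_iota /f /=; lia.
rewrite -(sum_perms_perm _ pm) (@sum_perms_map _ _ _ f); last first.
  by move=> x; rewrite mem_iota /f /=; lia.
apply: eq_big_seq => w; rewrite mem_permutations => Hw.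
rewrite (@W_map _ _ _ _ _ true) ?addbT // => x y.
rewrite !(perm_mem Hw) !mem_iota /f /= => Hx Hy; apply/idP/idP; lia.
Qed.

End S3.

Section S4.
Variable R : comPzRingType.
Implicit Types t q : R.

Lemma filter_prod t q (P : pred nat) (l : seq nat) :
  t ^+ size (filter P l) * q ^+ sumn (filter P l) =
  \prod_(i <- l) (if P i then t * q ^+ i else 1).
Proof.
elim: l => [|x l IH]; first by rewrite big_nil /= mulr1.
rewrite big_cons /=; case: (P x); last by rewrite mul1r.
by rewrite /= exprS exprD -IH; rewrite -!mulrA; congr (_ * _); rewrite mulrCA.
Qed.

Lemma W_prod t q b k (w : seq nat) :
  W t q b k w = \prod_(i <- iota k (size w).-1)
     (if cnd b i (nth 0%N w (i - k)) (nth 0%N w (i - k).+1) then t * q ^+ i else 1).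
Proof.
elim: w k => [|x w IH] k; first by rewrite W_nil big_nil.
case: w IH => [|y w] IH; first by rewrite W_one big_nil.
rewrite W_cons2 IH /= big_cons subnn; congr (_ * _).
apply: eq_big_seq => i; rewrite mem_iota => /andP [ki _].
by rewrite -(subnSK ki).
Qed.

Lemma word_uniq n (s : 'S_n) : uniq (word s).
Proof.
rewrite /word map_inj_uniq ?enum_uniq // => i j /val_inj; exact: perm_inj.
Qed.

Lemma word_perm n (s : 'S_n) : perm_eq (word s) (iota 0 n).
Proof.
apply: uniq_perm; rewrite ?word_uniq ?iota_uniq // => x.
rewrite mem_iota add0n; apply/mapP/idP => [[i _ ->] | xn]; first exact: ltn_ord.
exists (s^-1 (Ordinal xn))%g; first by rewrite mem_enum.
by rewrite permKV.
Qed.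

Lemma word_inj n : injective (@word n).
Proof.
move=> s1 s2 E; apply/permP => i; apply: val_inj.
move/eq_in_map: E => E; apply: E; by rewrite mem_enum.
Qed.

Lemma sum_word n (F : seq nat -> R) :
  \sum_(s : 'S_n) F (word s) = \sum_(w <- permutations (iota 0 n)) F w.
Proof.
rewrite -(big_map (@word n) xpredT F); apply: perm_big.
have u1 : uniq (map (@word n) (index_enum {perm 'I_n})).
  by rewrite map_inj_uniq ?index_enum_uniq //; exact: word_inj.
have sub : {subset map (@word n) (index_enum {perm 'I_n}) <= permutations (iota 0 n)}.
  by move=> w /mapP [s _ ->]; rewrite mem_permutations word_perm.
have le : (size (permutations (iota 0 n)) <= size (map (@word n) (index_enum {perm 'I_n})))%N.
  by rewrite size_map size_permutations ?iota_uniq // size_iota -card_Sn cardT enumT.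
have [_ E] := uniq_min_size u1 sub le.
by apply: uniq_perm; rewrite ?permutations_uniq.
Qed.

Lemma Ahat_W n t q : Ahat n t q = \sum_(w <- permutations (iota 0 n)) W t q false 1 w.
Proof.
rewrite /Ahat -sum_word; apply: eq_bigr => s _.
rewrite /altdes /altmaj filter_prod W_prod.
have -> : size (word s) = n by rewrite size_map size_enum_ord.
apply: eq_big_seq => i; rewrite mem_iota => /andP [i1 _].
rewrite /in_altD /pi_at /cnd addbF subn1 /= prednK //.
Qed.

End S4.

Definition LX n (X : {set 'I_n}) : seq nat := [seq val j | j <- enum X].

Lemma LX_lt n (X : {set 'I_n}) x : x \in LX X -> (x < n)%N.
Proof. by case/mapP => j _ ->; exact: ltn_ord. Qed.

Lemma mem_LX n (X : {set 'I_n}) (j : 'I_n) : (val j \in LX X) = (j \in X).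
Proof. by rewrite /LX mem_map ?mem_enum //; exact: val_inj. Qed.

Lemma LX_uniq n (X : {set 'I_n}) : uniq (LX X).
Proof. by rewrite /LX map_inj_uniq ?enum_uniq //; exact: val_inj. Qed.

Lemma size_LX n (X : {set 'I_n}) : size (LX X) = #|X|.
Proof. by rewrite /LX size_map cardE. Qed.

Definition pre (n : nat) (w : seq nat) := take (index n w) w.
Definition post (n : nat) (w : seq nat) := drop (index n w).+1 w.

Lemma split_pp n s t : n \notin s -> pre n (s ++ n :: t) = s /\ post n (s ++ n :: t) = t.
Proof.
move=> ns; have Hi : index n (s ++ n :: t) = size s.
  by rewrite index_cat (negbTE ns) index_head addn0.
rewrite /pre /post Hi take_size_cat //; split => //.
by rewrite -cat_rcons drop_size_cat // size_rcons.
Qed.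

Lemma pp_split n w : n \in w -> w = pre n w ++ n :: post n w.
Proof.
move=> nw; rewrite /pre /post -[n in _ ++ n :: _](nth_index 0%N nw) -drop_nth ?index_mem //.
by rewrite cat_take_drop.
Qed.

Lemma uniq_flatten_key (A B : eqType) (s : seq A) (G : A -> seq B) (key : B -> A) :
  uniq s -> (forall a, uniq (G a)) -> (forall a b, b \in G a -> key b = a) ->
  uniq (flatten (map G s)).
Proof.
move=> us uG kG; elim: s us => [|a s IH] //= /andP [na us].
rewrite cat_uniq uG IH // andbT; apply/hasPn => b /flatten_mapP [a' a's bG'].
apply/negP => bG; move: na; rewrite -(kG _ _ bG) (kG _ _ bG') a's //.
Qed.

Lemma decomp_perm n :
  perm_eq (permutations (n :: iota 0 n))
    (flatten [seq [seq s ++ n :: t | s <- permutations (LX X), t <- permutations (LX (~: X))]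
             | X <- index_enum {set 'I_n}]).
Proof.
have nLX : forall (X : {set 'I_n}) s, s \in permutations (LX X) -> n \notin s.
  move=> X s; rewrite mem_permutations => /perm_mem H; apply/negP; rewrite H.
  by move/LX_lt; rewrite ltnn.
apply: uniq_perm; first exact: permutations_uniq.
  apply: (@uniq_flatten_key _ _ _ _ (fun w => [set j : 'I_n | val j \in pre n w])).
  - exact: index_enum_uniq.
  - move=> X; apply: allpairs_uniq; rewrite ?permutations_uniq //.
    move=> [s1 t1] [s2 t2] /allpairsP [[a1 b1] [/= H1 _ [-> ->]]].
    move=> /allpairsP [[a2 b2] [/= H2 _ [-> ->]]] /= E.
    have [E1 E2] := split_pp b1 (nLX _ _ H1).
    have [E3 E4] := split_pp b2 (nLX _ _ H2).
    have := congr1 (pre n) E; have := congr1 (post n) E.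
    by rewrite E1 E2 E3 E4 => -> ->.
  - move=> X b /allpairsP [[s t] [/= Hs _ ->]].
    have [E1 _] := split_pp t (nLX _ _ Hs).
    apply/setP => j; rewrite inE E1 -mem_LX.
    by move: Hs; rewrite mem_permutations => /perm_mem ->.
move=> w; rewrite mem_permutations; apply/idP/flatten_mapP.
  move=> Hw.
  have uw : uniq w by rewrite (perm_uniq Hw) /= iota_uniq mem_iota ltnn andbF.
  have nw : n \in w by rewrite (perm_mem Hw) mem_head.
  have E := pp_split nw.
  have memw : forall x, (x \in w) = (x == n) || (x < n)%N.
    by move=> x; rewrite (perm_mem Hw) inE mem_iota.
  move: (uw); rewrite {1}E cat_uniq /= => /and3P [_ /norP [_ disj] /andP [npost _]].
  set X := [set j : 'I_n | val j \in pre n w].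
  exists X; first exact: mem_index_enum.
  apply/allpairsP; exists (pre n w, post n w); split => //=.
  + rewrite mem_permutations; apply: uniq_perm; rewrite ?LX_uniq ?take_uniq //.
    move=> x; apply/idP/idP => [xp | /mapP [j]].
      have : x \in w by rewrite E mem_cat xp.
      rewrite memw; case: eqP => [xn | _ /= xn].
        move: uw; rewrite {1}E cat_uniq /= => /and3P [_ /norP [nn _] _].
        by rewrite xn in xp; rewrite xp in nn.
      by rewrite -[x]/(val (Ordinal xn)) mem_LX inE.
    by rewrite mem_enum inE => Hj ->.
  + rewrite mem_permutations; apply: uniq_perm; rewrite ?LX_uniq ?drop_uniq //.
    move=> x; apply/idP/idP => [xp | /mapP [j]].
      have : x \in w by rewrite E mem_cat inE xp !orbT.
      rewrite memw; case: eqP => [xn | _ /= xn].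
        by rewrite xn in xp; rewrite xp in npost.
      rewrite -[x]/(val (Ordinal xn)) mem_LX !inE; apply/negP => xpre.
      by move/hasPn: disj => /(_ _ xp); rewrite /= xpre.
    rewrite mem_enum !inE => Hj ->.
    have : val j \in w by rewrite memw ltn_ord orbT.
    rewrite {1}E mem_cat (negbTE Hj) /= inE; case/orP => // /eqP jn.
    by move: (ltn_ord j); rewrite jn ltnn.
move=> [X _ /allpairsP [[s t] [/= Hs Ht ->]]].
rewrite !mem_permutations in Hs Ht.
rewrite -cat1s perm_catCA /= perm_cons.
apply: (perm_trans (perm_cat Hs Ht)).
apply: uniq_perm; rewrite ?iota_uniq //.
  rewrite cat_uniq !LX_uniq andbT /=; apply/hasPn => x /mapP [j].
  by rewrite mem_enum inE => Hj ->; rewrite mem_LX.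
move=> x; rewrite mem_cat mem_iota add0n; apply/idP/idP.
  by case/orP => /LX_lt.
move=> xn; rewrite -[x]/(val (Ordinal xn)) !mem_LX inE.
by case: (_ \in X).
Qed.

Section S5.
Variable R : comPzRingType.

Lemma decomp n (F : seq nat -> R) :
  \sum_(w <- permutations (n :: iota 0 n)) F w =
  \sum_(X : {set 'I_n}) \sum_(s <- permutations (LX X))
     \sum_(t <- permutations (LX (~: X))) F (s ++ n :: t).
Proof.
rewrite (perm_big _ (decomp_perm n)) big_flatten big_map.
apply: eq_bigr => X _.
by rewrite big_allpairs_dep.
Qed.

End S5.

Section S6.
Variable R : comPzRingType.
Implicit Types t q : R.

Lemma sumL t q b (L : seq nat) : uniq L ->
  \sum_(w <- permutations L) W t q b 1 w = Ahat (size L) t q.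
Proof.
move=> uL; rewrite relabel // Ahat_W.
by case: b => //; rewrite compl.
Qed.

Lemma W_left t q b n z u : (z < n)%N ->
  W t q b 1 (n :: z :: u) = (if b then 1 else t * q) * W (t * q) q (~~ b) 1 (z :: u).
Proof.
move=> zn; rewrite W_cons2.
have -> : W t q b 2 (z :: u) = W (t * q) q (~~ b) 1 (z :: u).
  by have := W_shift t q b 1 1 (z :: u); rewrite expr1 addbT.
rewrite /cnd /= expr1 zn ltnNge ltnW //.
by case: b; rewrite ?addbT ?addbF.
Qed.

Lemma W_right t q b n x s : all (fun y => y < n)%N (x :: s) ->
  W t q b 1 ((x :: s) ++ [:: n]) =
  W t q b 1 (x :: s) * (if odd (size s).+1 (+) b then 1 else t * q ^+ (size s).+1).
Proof.
move=> H; rewrite cats1 W_rcons /cnd add1n.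
have ln : (last x s < n)%N by move/allP: H; apply; exact: mem_last.
by rewrite ln ltnNge ltnW //; case: (odd _ (+) b).
Qed.

Lemma W_mid t q b n x s z u : all (fun y => y < n)%N (x :: s) -> (z < n)%N ->
  W t q b 1 ((x :: s) ++ n :: z :: u) =
  W t q b 1 (x :: s) * W (t * q ^+ (size s).+2) q (b (+) odd (size s).+2) 1 (z :: u) *
  (if odd (size s).+1 (+) b then 1 else t ^+ 2 * q ^+ (2 * (size s).+1 + 1)).
Proof.
move=> H zn; rewrite W_cat W_rcons W_cons2 /cnd.
have ln : (last x s < n)%N by move/allP: H; apply; exact: mem_last.
rewrite ln zn ltnNge (ltnW ln) ltnNge (ltnW zn) /=.
have -> : W t q b (1 + (size s).+1).+1 (z :: u) =
          W (t * q ^+ (size s).+2) q (b (+) odd (size s).+2) 1 (z :: u).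
  by rewrite -W_shift add1n.
have key : t * q ^+ (size s).+1 * (t * q ^+ (size s).+2) = t ^+ 2 * q ^+ (2 * (size s).+1 + 1).
  rewrite (_ : (2 * (size s).+1 + 1 = (size s).+1 + (size s).+2)%N); last lia.
  by rewrite exprD mulrACA expr2.
rewrite !add1n -key add0n.
have -> : odd (size s).+2 = odd (size s) by rewrite /= negbK.
rewrite ?negbK.
by case: (odd (size s)); case: b => /=; ring.
Qed.

End S6.

Section S7.
Variable R : comPzRingType.
Implicit Types t q : R.

Lemma cardC n (X : {set 'I_n}) : #|~: X| = (n - #|X|)%N.
Proof. have := cardsC X; rewrite card_ord; lia. Qed.

Lemma perms_LX_lt n (X : {set 'I_n}) s : s \in permutations (LX X) ->
  all (fun y => y < n)%N s /\ size s = #|X|.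
Proof.
rewrite mem_permutations => Hs; split; last by rewrite (perm_size Hs) size_LX.
by apply/allP => y; rewrite (perm_mem Hs) => /LX_lt.
Qed.

Lemma G_mid t q b n (X : {set 'I_n}) : (0 < #|X| < n)%N ->
  \sum_(s <- permutations (LX X)) \sum_(u <- permutations (LX (~: X))) W t q b 1 (s ++ n :: u)
  = Ahat #|X| t q * Ahat (n - #|X|) (t * q ^+ #|X|.+1) q *
    (if odd #|X| (+) b then 1 else t ^+ 2 * q ^+ (2 * #|X| + 1)).
Proof.
move=> /andP [i0 iN].
have E1 : Ahat #|X| t q = \sum_(s <- permutations (LX X)) W t q b 1 s.
  by rewrite sumL ?LX_uniq // size_LX.
have E2 : Ahat (n - #|X|) (t * q ^+ #|X|.+1) q =
    \sum_(u <- permutations (LX (~: X))) W (t * q ^+ #|X|.+1) q (b (+) odd #|X|.+1) 1 u.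
  by rewrite sumL ?LX_uniq // size_LX cardC.
rewrite E1 E2 mulr_suml mulr_suml; apply: eq_big_seq => s Hs.
rewrite mulr_sumr mulr_suml; apply: eq_big_seq => u Hu.
have [alls ss] := perms_LX_lt Hs.
have [allu su] := perms_LX_lt Hu.
case: s Hs alls ss => [|x s] Hs alls ss; first by move: i0; rewrite -ss.
case: u Hu allu su => [|z u] Hu allu su.
  by move: iN; rewrite -subn_gt0 -cardC -su.
rewrite W_mid //; last by case/andP: allu.
by rewrite -ss.
Qed.

Lemma G_left t q b n (X : {set 'I_n}) : (0 < n)%N -> #|X| = 0%N ->
  \sum_(s <- permutations (LX X)) \sum_(u <- permutations (LX (~: X))) W t q b 1 (s ++ n :: u)
  = (if b then 1 else t * q) * Ahat n (t * q) q.
Proof.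
move=> n0 X0.
have -> : LX X = [::] by apply/eqP; rewrite -size_eq0 size_LX X0.
rewrite big_seq1 /=.
have E : Ahat n (t * q) q = \sum_(u <- permutations (LX (~: X))) W (t * q) q (~~ b) 1 u.
  by rewrite sumL ?LX_uniq // size_LX cardC X0 subn0.
rewrite E mulr_sumr.
apply: eq_big_seq => u Hu.
have [allu su] := perms_LX_lt Hu.
case: u Hu allu su => [|z u] Hu allu su.
  by move: su; rewrite cardC X0 subn0 => su; move: n0; rewrite -su ltnn.
by rewrite W_left //; case/andP: allu.
Qed.

Lemma G_right t q b n (X : {set 'I_n}) : (0 < n)%N -> #|X| = n ->
  \sum_(s <- permutations (LX X)) \sum_(u <- permutations (LX (~: X))) W t q b 1 (s ++ n :: u)
  = Ahat n t q * (if odd n (+) b then 1 else t * q ^+ n).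
Proof.
move=> n0 Xn.
have -> : LX (~: X) = [::] by apply/eqP; rewrite -size_eq0 size_LX cardC Xn subnn.
have E : Ahat n t q = \sum_(s <- permutations (LX X)) W t q b 1 s.
  by rewrite sumL ?LX_uniq // size_LX Xn.
rewrite E mulr_suml.
apply: eq_big_seq => s Hs; rewrite big_seq1.
have [alls ss] := perms_LX_lt Hs.
case: s Hs alls ss => [|x s] Hs alls ss.
  by move: n0 Xn ss => /=; lia.
rewrite W_right //; have -> : (size s).+1 = n by move: ss Xn => /=; lia.
by [].
Qed.

End S7.
Unset Implicit Arguments.

Theorem theorem2p2 (R : comPzRingType) (n : nat) (t q : R) : (1 <= n)%N ->
  Ahat 1 t q = 1 /\
  2%:R * Ahat n.+1 t q =
    (1 + t * q) * Ahat n (t * q) q + (1 + t * q ^+ n) * Ahat n t q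
    + \sum_(1 <= i < n) (1 + t ^+ 2 * q ^+ (2 * i + 1)) * ('C(n, i))%:R
        * Ahat i t q * Ahat (n - i) (t * q ^+ i.+1) q.
Proof.
move=> n1; split.
  rewrite Ahat_W (_ : permutations (iota 0 1) = [:: [:: 0%N]]) //.
  by rewrite big_seq1 W_one.
pose G b (X : {set 'I_n}) := \sum_(s <- permutations (LX X))
     \sum_(u <- permutations (LX (~: X))) W t q b 1 (s ++ n :: u).
have HA : forall b, Ahat n.+1 t q = \sum_X G b X.
  move=> b; rewrite Ahat_W.
  have -> : \sum_(w <- permutations (iota 0 n.+1)) W t q false 1 w =
            \sum_(w <- permutations (iota 0 n.+1)) W t q b 1 w.
    by case: b => //; rewrite compl.
  rewrite (@sum_perms_perm _ _ _ (n :: iota 0 n)); first exact: decomp.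
  by rewrite -addn1 iotaD /= add0n cats1 perm_rcons.
pose T (i : nat) := if i == 0%N then (1 + t * q) * Ahat n (t * q) q
  else if i == n then (1 + t * q ^+ n) * Ahat n t q
  else (1 + t ^+ 2 * q ^+ (2 * i + 1)) * Ahat i t q * Ahat (n - i) (t * q ^+ i.+1) q.
have HT : forall X, G false X + G true X = T #|X|.
  move=> X; rewrite /G /T.
  have Xn : (#|X| <= n)%N by have := max_card X; rewrite card_ord.
  case: eqP => [X0 | /eqP X0].
    by rewrite !G_left //=; ring.
  case: eqP => [XN | /eqP XN].
    rewrite !G_right //; case: (odd n) => /=; ring.
  rewrite !G_mid ?lt0n ?X0 ?ltn_neqAle ?XN //.
  by case: (odd #|X|) => /=; ring.
rewrite mulr_natl mulr2n {1}(HA false) (HA true) -big_split /=.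
rewrite (eq_bigr _ (fun X _ => HT X)).
have -> : \sum_(X : {set 'I_n}) T #|X| = \sum_(i < n.+1) T i *+ 'C(n, i).
  rewrite (partition_big (fun X : {set 'I_n} => (inord #|X| : 'I_n.+1)) xpredT) //.
  apply: eq_bigr => i _.
  have cX : forall X : {set 'I_n}, (#|X| < n.+1)%N.
    by move=> X; have := max_card X; rewrite card_ord.
  rewrite (eq_bigr (fun _ => T i)); last first.
    by move=> X /eqP <-; rewrite inordK.
  rewrite sumr_const; congr (_ *+ _).
  rewrite (_ : 'C(n, i) = #|[set X : {set 'I_n} | #|X| == i]|); last by rewrite card_draws card_ord.
  apply: eq_card => X; rewrite inE /=.
  apply/eqP/eqP => [<- | E]; first by rewrite inordK.
  by rewrite E inord_val.
rewrite -(big_mkord xpredT (fun i => T i *+ 'C(n, i))) big_nat_recr //= big_ltn //.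
rewrite bin0 binn !mulr1n.
have -> : T 0%N = (1 + t * q) * Ahat n (t * q) q by [].
have -> : T n = (1 + t * q ^+ n) * Ahat n t q.
  by rewrite /T eqxx; case: eqP => // n0; move: n1; rewrite n0.
rewrite addrAC; congr (_ + _).
apply: eq_big_nat => i /andP [i1 iN].
rewrite /T (negbTE (lt0n_neq0 i1)) (ltn_eqF iN) -mulr_natr.
move: (1 + _) (Ahat i t q) (Ahat (n - i) _ q) ('C(n, i)%:R) => a b c d.
ring.
Qed.
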